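(* Let $\mathcal{H}$ be a finite family of digraphs containing a directed path $P$ of length $p$. For each $H^*\in\mathcal{H}^+_p$, there exists a subgraph $H'\subseteq H^*$ such that $H'\in GPC(P)$.
   Context: Subgraphs are not necessarily induced. For a digraph $H$, $GPC(H)$ is the set of strongly connected digraphs $H\cup P_1\cup\dots\cup P_\ell$ (union of vertex and arc sets) where each $P_i$ is a directed path with both end-points in $V(H)$ and the ordered end-point pairs of the $P_i$ are pairwise distinct; $\{P_1,\dots,P_\ell\}$ is a witnessing collection of paths. $GPC(\mathcal{H})=\bigcup_{H\in\mathcal{H}}GPC(H)$. $\mathcal{H}^-_p$ is the set of digraphs in $GPC(\mathcal{H})$ admitting a witnessing collection of paths all of length at most $p-1$, and $\mathcal{H}^+_p=GPC(\mathcal{H})\setminus\mathcal{H}^-_p$. Path lengths are measured consistently for $P$ and for witnessing paths. *)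

(* Defs.v *)
From mathcomp Require Import all_boot.
Set Implicit Arguments. Unset Strict Implicit. Unset Printing Implicit Defensive.

(* A digraph with vertices in the ambient finite universe T:
   (vertex set, arc set). *)
Notation digraph T := ({set T} * {set (T * T)})%type.

Section Digraphs.
Variable T : finType.

Definition is_digraph (G : digraph T) : bool :=
  [forall a in G.2, [&& a.1 \in G.1, a.2 \in G.1 & a.1 != a.2]].

(* A directed path is encoded by its start vertex x and the remaining
   vertices r, i.e. the vertex sequence x :: r (all distinct). *)
Definition dpath := (T * seq T)%type.
Definition dpath_ok (q : dpath) : bool := uniq (q.1 :: q.2).
Definition dpath_len (q : dpath) : nat := size q.2.
Definition dpath_start (q : dpath) : T := q.1.
Definition dpath_end (q : dpath) : T := last q.1 q.2.
Definition dpath_graph (q : dpath) : digraph T :=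
  ([set x in q.1 :: q.2], [set a | a \in zip (q.1 :: q.2) q.2]).

Definition is_dipath_of_length (G : digraph T) (p : nat) : Prop :=
  exists q : dpath, [/\ dpath_ok q, dpath_len q = p & G = dpath_graph q].

Definition subgraph (H G : digraph T) : bool :=
  (H.1 \subset G.1) && (H.2 \subset G.2).

Definition strongly_connected (G : digraph T) : bool :=
  [forall u in G.1, forall v in G.1, connect (fun x y => (x, y) \in G.2) u v].

(* ps is a witnessing collection of paths for G = H ∪ P_1 ∪ ... ∪ P_l *)
Definition witnessing (H G : digraph T) (ps : seq dpath) : Prop :=
  [/\ all dpath_ok ps,
      all (fun q => (dpath_start q \in H.1) && (dpath_end q \in H.1)) ps,
      uniq [seq (dpath_start q, dpath_end q) | q <- ps] &
      G = (H.1 :|: \bigcup_(q <- ps) (dpath_graph q).1,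
           H.2 :|: \bigcup_(q <- ps) (dpath_graph q).2)].

Definition GPC (H G : digraph T) : Prop :=
  strongly_connected G /\ exists ps, witnessing H G ps.

Definition GPC_fam (Hf : {set digraph T}) (G : digraph T) : Prop :=
  exists2 H, H \in Hf & GPC H G.

(* G ∈ Hf^-_p : witnessing paths all of length <= p-1, i.e. < p *)
Definition Hminus (Hf : {set digraph T}) (p : nat) (G : digraph T) : Prop :=
  exists2 H, H \in Hf &
    strongly_connected G /\
    exists ps, witnessing H G ps /\ all (fun q => dpath_len q < p) ps.

Definition Hplus (Hf : {set digraph T}) (p : nat) (G : digraph T) : Prop :=
  GPC_fam Hf G /\ ~ Hminus Hf p G.

Definition iso (G H : digraph T) : Prop :=
  exists f : T -> T,
    [/\ {in G.1 &, injective f},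
        f @: G.1 = H.1 &
        [set (f a.1, f a.2) | a in G.2] = H.2].

End Digraphs.

(* Main.v *)
Require Import Defs.
From mathcomp Require Import all_boot.
Set Implicit Arguments. Unset Strict Implicit. Unset Printing Implicit Defensive.

Section Aux.
Variable T : finType.

Lemma zip_path (e : rel T) x s :
  path e x s = all (fun a => e a.1 a.2) (zip (x :: s) s).
Proof. by elim: s x => //= y s IH x; rewrite IH. Qed.

Lemma zip_mem_uniq x (s : seq T) a : uniq (x :: s) -> a \in zip (x :: s) s ->
  [&& a.1 \in x :: s, a.2 \in x :: s & a.1 != a.2].
Proof.
elim: s x => [|y s IH] x //= /andP[xn uys]; rewrite in_cons => /orP[/eqP-> /=|].
  rewrite !in_cons eqxx /=; move: xn; rewrite in_cons negb_or => /andP[-> _].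
  by rewrite eqxx orbT.
move/(IH _ uys)=> /and3P[h1 h2 h3].
by rewrite in_cons h1 orbT in_cons h2 orbT h3.
Qed.

Lemma zip_mem_eq (g : T -> T) (s t : seq T) :
  zip (map g s) (map g t) = map (fun a => (g a.1, g a.2)) (zip s t).
Proof. by elim: s t => [|x s IH] [|y t] //=; rewrite IH. Qed.

Lemma path_connect_last (e : rel T) x s y :
  path e x s -> y \in x :: s -> connect e y (last x s).
Proof.
elim: s x => [|z s IH] x /=.
  by move=> _; rewrite in_cons orbF => /eqP ->; exact: connect0.
move=> /andP[exz pz]; rewrite in_cons => /orP[/eqP->|ys].
  apply: connect_trans (connect1 exz) _; exact: (path_connect pz (mem_last z s)).
exact: IH pz ys.
Qed.

Lemma path_in (e : rel T) (V : {set T}) x s :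
  path e x s -> (forall a b, e a b -> b \in V) -> all (fun z => z \in V) s.
Proof.
move=> + HV; elim: s x => //= y s IH x /andP[exy ps].
by rewrite (HV _ _ exy) (IH _ ps).
Qed.

Lemma in_bigcup (X : eqType) (F : X -> {set T}) (l : seq X) i z :
  i \in l -> z \in F i -> z \in \bigcup_(j <- l) F j.
Proof.
elim: l => //= x l IH; rewrite big_cons in_cons in_setU => /orP[/eqP<- ->//|il zi].
by rewrite IH ?orbT.
Qed.

Lemma in_bigcup_inv (X : eqType) (F : X -> {set T}) (l : seq X) z :
  z \in \bigcup_(j <- l) F j -> exists2 i, i \in l & z \in F i.
Proof.
elim: l => [|x l IH]; first by rewrite big_nil in_set0.
rewrite big_cons in_setU => /orP[zx|/IH [i il zi]].
  by exists x; rewrite ?mem_head.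
by exists i; rewrite // in_cons il orbT.
Qed.

Lemma imset_map_can (X : finType) (h h' : X -> X) (l : seq X) :
  cancel h h' -> h' @: [set a | a \in map h l] = [set a | a \in l].
Proof.
move=> hK; apply/setP => y; rewrite inE; apply/imsetP/idP.
  by case=> a; rewrite inE => /mapP [b bl ->] ->; rewrite hK.
by move=> yl; exists (h y); rewrite ?inE ?map_f ?hK.
Qed.

Lemma ext_inj (s t : seq T) : uniq s -> uniq t -> size s = size t ->
  exists g : T -> T, injective g /\ map g s = t.
Proof.
move=> us ut sst.
pose s' := s ++ [seq x <- enum T | x \notin s].
pose t' := t ++ [seq x <- enum T | x \notin t].
have ins : forall x, x \in s'.
  by move=> x; rewrite mem_cat mem_filter mem_enum andbT orbN.
have int : forall x, x \in t'.
  by move=> x; rewrite mem_cat mem_filter mem_enum andbT orbN.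
have us' : uniq s'.
  rewrite cat_uniq us (filter_uniq _ (enum_uniq _)) andbT /=.
  by apply/hasPn => x; rewrite mem_filter => /andP[].
have ut' : uniq t'.
  rewrite cat_uniq ut (filter_uniq _ (enum_uniq _)) andbT /=.
  by apply/hasPn => x; rewrite mem_filter => /andP[].
have ss : size s' = size t'.
  have e1 : perm_eq s' (enum T) by apply: uniq_perm => [||x]; rewrite ?enum_uniq //; rewrite ins mem_enum.
  have e2 : perm_eq t' (enum T) by apply: uniq_perm => [||x]; rewrite ?enum_uniq //; rewrite int mem_enum.
  by rewrite (perm_size e1) (perm_size e2).
exists (fun x => nth x t' (index x s')); split.
  move=> x y /= E.
  have ix : index x s' < size t' by rewrite -ss index_mem.
  have iy : index y s' < size t' by rewrite -ss index_mem.
  move: E; rewrite (set_nth_default y x ix) => /eqP; rewrite nth_uniq // => /eqP E.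
  by rewrite -(nth_index x (ins x)) E nth_index.
case: (pickP (@predT T)) => [x0 _|e0]; last first.
  have s0 : s = [::] by case: (s) => // y ?; have := e0 y.
  by rewrite s0 /=; apply/esym/size0nil; rewrite -sst s0.
apply: (@eq_from_nth _ x0).
  by rewrite size_map.
move=> i; rewrite size_map => Hi.
rewrite (nth_map x0) //.
rewrite index_cat mem_nth // index_uniq // nth_cat -sst Hi.
by apply: set_nth_default; rewrite -sst.
Qed.

Lemma sc2 (x : T) r s : last (last x r) s = x ->
  strongly_connected ([set z in x :: r] :|: [set z in last x r :: s],
    [set a | a \in zip (x :: r) r] :|: [set a | a \in zip (last x r :: s) s]).
Proof.
move=> ls; rewrite /strongly_connected /=.
pose e := fun a b : T => (a, b) \in [set a | a \in zip (x :: r) r] :|: [set a | a \in zip (last x r :: s) s].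
have p1 : path e x r.
  rewrite zip_path; apply/allP => -[a b] ab; by rewrite /e in_setU inE ab.
have p2 : path e (last x r) s.
  rewrite zip_path; apply/allP => -[a b] ab; by rewrite /e in_setU [_ \in [set _ | _ \in zip (last x r :: s) s]]inE ab orbT.
have key : forall u, u \in [set z in x :: r] :|: [set z in last x r :: s] ->
    connect e x u && connect e u x.
  move=> u; rewrite in_setU !in_set => /orP[] uin.
    rewrite (path_connect p1 uin) /=.
    apply: connect_trans (path_connect_last p1 uin) _.
    by rewrite -{2}ls; apply: (path_connect p2); rewrite mem_last.
  apply/andP; split.
    apply: connect_trans (path_connect p1 (mem_last x r)) _.
    exact: (path_connect p2 uin).
  by rewrite -{1}ls; exact: (path_connect_last p2 uin).
apply/forallP => u; apply/implyP => Hu; apply/forallP => v; apply/implyP => Hv.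
case/andP: (key u Hu) => _ h1; case/andP: (key v Hv) => h2 _.
exact: connect_trans h1 h2.
Qed.

End Aux.

Theorem lemma24 (T : finType) (Hf : {set digraph T}) (P : digraph T) (p : nat) :
  (forall H, H \in Hf -> is_digraph H) ->
  P \in Hf -> is_dipath_of_length P p ->
  forall Hstar : digraph T, Hplus Hf p Hstar ->
  exists H' : digraph T,
    [/\ is_digraph H', subgraph H' Hstar & exists2 G, GPC P G & iso G H'].
Proof.
move=> HHf _ [[u0 us] [okP lenP EP]] Hstar [[H HH [SC [ps W]]] NHm].
have [q qps qlen] : exists2 q, q \in ps & p <= dpath_len q.
  have : ~~ all (fun q => dpath_len q < p) ps.
    apply/negP => A; apply: NHm; exists H => //; split => //; by exists ps; split; [exact: W | exact: A].
  by case/allPn => q qps; rewrite -leqNgt => ?; exists q.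
case: W => okps endps ups EHs.
have HV : forall q, q \in ps -> forall z, z \in (dpath_graph q).1 -> z \in Hstar.1.
  move=> q' q'ps z zq; rewrite EHs /= in_setU; apply/orP; right.
  exact: (in_bigcup q'ps zq).
have HA : forall q, q \in ps -> forall a, a \in (dpath_graph q).2 -> a \in Hstar.2.
  move=> q' q'ps z zq; rewrite EHs /= in_setU; apply/orP; right.
  exact: (in_bigcup q'ps zq).
have Harc : forall a, a \in Hstar.2 -> a.2 \in Hstar.1.
  move=> a; rewrite {1}EHs /= in_setU => /orP[aH | /in_bigcup_inv [q' q'ps aq]].
    have := HHf H HH => /forallP/(_ a)/implyP/(_ aH)/and3P[_ h _].
    by rewrite EHs /= in_setU h.
  have uq : uniq (q'.1 :: q'.2) by apply: (allP okps).
  move: aq; rewrite /dpath_graph /= in_set => /(zip_mem_uniq uq)/and3P[_ h _].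
  by apply: (HV _ q'ps); rewrite /dpath_graph /= in_set.
case: q qps qlen => v0 r qps /= qlen.
pose e := fun a b : T => (a, b) \in Hstar.2.
have okq : uniq (v0 :: r) by apply: (allP okps _ qps).
have pq : path e v0 r.
  rewrite zip_path; apply/allP => -[a b] ab; apply: (HA _ qps).
  by rewrite /dpath_graph /= in_set.
pose vs := take p r.
have pvs : path e v0 vs.
  by move: pq; rewrite -(cat_take_drop p r) cat_path => /andP[].
have uvs : uniq (v0 :: vs) by have := take_uniq p.+1 okq.
have svs : size vs = p by rewrite size_takel.
pose vp := last v0 vs.
have sub_vs : {subset v0 :: vs <= v0 :: r}.
  move=> z; rewrite !in_cons => /orP[->//|/mem_take->]; by rewrite orbT.
have inQ : forall z, z \in v0 :: vs -> z \in Hstar.1.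
  move=> z /sub_vs zr; apply: (HV _ qps); by rewrite /dpath_graph /= in_set.
have v0in : v0 \in Hstar.1 by apply: inQ; rewrite mem_head.
have vpin : vp \in Hstar.1 by apply: inQ; rewrite mem_last.
move: SC => /forallP/(_ vp)/implyP/(_ vpin)/forallP/(_ v0)/implyP/(_ v0in).
move=> /connectP [w pw lw].
case: (shortenP pw) lw => rs prs urs _ lw.
have lrs' : last vp rs = v0 by rewrite lw.
have rsin : all (fun z => z \in Hstar.1) rs.
  by apply: (path_in prs) => a b; apply: (Harc (a, b)).
have [g [ginj gmap]] : exists g : T -> T, injective g /\ map g (v0 :: vs) = u0 :: us.
  by apply: ext_inj; [done|exact: okP|rewrite /= svs -lenP].
have gv0 : g v0 = u0 by case: gmap.
have gvs : map g vs = us by case: gmap.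
have glast : g vp = last u0 us by rewrite /vp -gv0 -gvs last_map.
pose f := invF ginj.
exists ([set z in v0 :: vs] :|: [set z in vp :: rs],
        [set a | a \in zip (v0 :: vs) vs] :|: [set a | a \in zip (vp :: rs) rs]).
split.
- apply/forallP => a; apply/implyP; rewrite in_setU !in_set => /orP[] ain.
    have /and3P[h1 h2 h3] := zip_mem_uniq uvs ain.
    by rewrite /= h1 h2 h3.
  have /and3P[h1 h2 h3] := zip_mem_uniq urs ain.
  by rewrite /= h1 h2 h3 !orbT.
- apply/andP; split; apply/subsetP => z; rewrite in_setU !in_set => /orP[] zin.
  + exact: inQ.
  + move: zin; rewrite in_cons => /orP[/eqP->//|]; exact: (allP rsin).
  + move: pvs; rewrite zip_path => /allP/(_ z zin); by case: z zin.
  + move: prs; rewrite zip_path => /allP/(_ z zin); by case: z zin.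
exists ([set z in u0 :: us] :|: [set z in last u0 us :: map g rs],
    [set a | a \in zip (u0 :: us) us] :|: [set a | a \in zip (last u0 us :: map g rs) (map g rs)]).
  rewrite EP; split.
    by apply: sc2; rewrite -glast last_map lrs' gv0.
  exists [:: (last u0 us, map g rs)]; split.
  - by rewrite /= andbT /dpath_ok -glast; have := urs; rewrite -(map_inj_uniq ginj).
  - rewrite /= andbT /dpath_start /dpath_end /= !in_set mem_last /=.
    by rewrite -glast last_map lrs' gv0 mem_head.
  - by [].
  - by rewrite !big_seq1.
exists f; split.
- by move=> x y _ _; apply: (can_inj (f_invF ginj)).
- rewrite imsetU -gmap -glast -[g vp :: map g rs]/(map g (vp :: rs)).
  by rewrite !imset_map_can //; apply: invF_f.
- rewrite /= imsetU -glast -gvs -gv0 -[g vp :: map g rs]/(map g (vp :: rs)).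
  rewrite -[g v0 :: map g vs]/(map g (v0 :: vs)) !zip_mem_eq.
  by rewrite !imset_map_can // => -[a b] /=; rewrite /f !invF_f.
Qed.
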